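(* Let $p\ge 1$, let $F:\mathbb{R}^p\to\mathbb{R}^p$ and $G(\boldsymbol{x}) := F(\boldsymbol{x})-\boldsymbol{x}$. Let $\boldsymbol{x}^\ast\in\mathbb{R}^p$ and let $M\in\mathbb{R}^{p\times p}$ be a fixed non-singular symmetric matrix defining $\|A\|_M := \|MAM\|_F$. Assume: (A1) $G$ is differentiable in an open convex set $D$ containing $\boldsymbol{x}^\ast$, $G(\boldsymbol{x}^\ast)=0$, $dG(\boldsymbol{x}^\ast)$ is non-singular, and for some constants $d>0$ and $K$ we have $\|dG(\boldsymbol{x})-dG(\boldsymbol{x}^\ast)\|\le K\|\boldsymbol{x}-\boldsymbol{x}^\ast\|^d$ for all $\boldsymbol{x}\in D$. (A2) There are a neighborhood $N_1$ of $\boldsymbol{x}^\ast$ with $N_1\subset D\cap S$ on which the update $\bar{\boldsymbol{x}}=\boldsymbol{x}-HG(\boldsymbol{x})$ is well-defined, a neighborhood $N_2$ of $dG(\boldsymbol{x}^\ast)^{-1}$ consisting of non-singular matrices on which the update $H\mapsto\bar H$ is well-defined, and non-negative constants $\alpha_1,\alpha_2$ such that for every $(\boldsymbol{x},H)\in N_1\times N_2$, $$\|\bar H-dG(\boldsymbol{x}^\ast)^{-1}\|_M\le\Big[1+\alpha_1\max\{\|F(\boldsymbol{x})-\boldsymbol{x}^\ast\|^d,\|\boldsymbol{x}-\boldsymbol{x}^\ast\|^d\}\Big]\|H-dG(\boldsymbol{x}^\ast)^{-1}\|_M+\alpha_2\max\{\|F(\boldsymbol{x})-\boldsymbol{x}^\ast\|^d,\|\boldsymbol{x}-\boldsymbol{x}^\ast\|^d\}.$$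 Then for each $r\in(0,1)$ there exist positive constants $\epsilon(r)$ and $\delta(r)$ such that whenever $\|\boldsymbol{x}_0-\boldsymbol{x}^\ast\|<\epsilon(r)$ and $\|H_0-dG(\boldsymbol{x}^\ast)^{-1}\|_M<\delta(r)$, the sequence defined by $\boldsymbol{x}_{k+1}=\boldsymbol{x}_k-H_kG(\boldsymbol{x}_k)$, $H_{k+1}=\bar H$ evaluated at $(\boldsymbol{x}_k,H_k)$, is well-defined and converges to $\boldsymbol{x}^\ast$. Furthermore $\|\boldsymbol{x}_{k+1}-\boldsymbol{x}^\ast\|\le r\|\boldsymbol{x}_k-\boldsymbol{x}^\ast\|$ for each $k\ge 0$, and the sequences $\{\|H_k\|\}$ and $\{\|H_k^{-1}\|\}$ are uniformly bounded.
   Context: $F$ is a majorization–minimization (MM) algorithm map and $G(\boldsymbol{x})=F(\boldsymbol{x})-\boldsymbol{x}$ its residual; $dG$ denotes the Jacobian of $G$. $\|\cdot\|$ is a chosen vector norm on $\mathbb{R}^p$ and, for matrices, its induced operator norm; $\|\cdot\|_F$ is the Frobenius norm. Standing assumption: the MM map is locally convergent to $\boldsymbol{x}^\ast$ in a neighborhood $S$ of $\boldsymbol{x}^\ast$ with linear rate $\tau$, i.e. $\|F(\boldsymbol{x})-\boldsymbol{x}^\ast\|\le\tau\|\boldsymbol{x}-\boldsymbol{x}^\ast\|$ for all $\boldsymbol{x}\in S$, with $\tau\in(0,1)$. For a pair $(\boldsymbol{x},H)$ with $\boldsymbol{x}\in\mathbb{R}^p$, $H\in\mathbb{R}^{p\times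 p}$, define $\boldsymbol{u}=F(\boldsymbol{x})-\boldsymbol{x}$, $\boldsymbol{v}=G(F(\boldsymbol{x}))-G(\boldsymbol{x})$, and the updates $\bar{\boldsymbol{x}}=\boldsymbol{x}-HG(\boldsymbol{x})$ and $\bar H=H-H\frac{\boldsymbol{v}\boldsymbol{v}^T}{\boldsymbol{v}^T\boldsymbol{v}}+\frac{\boldsymbol{u}\boldsymbol{v}^T}{\boldsymbol{v}^T\boldsymbol{v}}$ (defined when $\boldsymbol{v}\neq 0$). *)

(* Defs.v *)
From HB Require Import structures.
From mathcomp Require Import all_boot all_order all_algebra.
From mathcomp Require Import all_classical all_reals all_analysis.
Set Implicit Arguments. Unset Strict Implicit. Unset Printing Implicit Defensive.
Import Order.TTheory GRing.Theory Num.Theory.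
Import numFieldNormedType.Exports.
Local Open Scope classical_set_scope.
Local Open Scope ring_scope.

Section Defs.
Context {R : realType} {p : nat}.

Definition is_vnorm (nv : 'cV[R]_p -> R) : Prop :=
  [/\ forall x, 0 <= nv x,
      forall x, nv x = 0 -> x = 0,
      forall (a : R) x, nv (a *: x) = `|a| * nv x &
      forall x y, nv (x + y) <= nv x + nv y].

Definition opnorm (nv : 'cV[R]_p -> R) (A : 'M[R]_p) : R :=
  sup [set nv (A *m v) | v in [set v | nv v <= 1]].

Definition frob (A : 'M[R]_p) : R :=
  Num.sqrt (\sum_(i < p) \sum_(j < p) A i j ^+ 2).
Definition normM (M A : 'M[R]_p) : R := frob (M *m A *m M).

Definition resid (F : 'cV[R]_p -> 'cV[R]_p) (x : 'cV[R]_p) : 'cV[R]_p := F x - x.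

Definition uvec F (x : 'cV[R]_p) := F x - x.
Definition vvec F (x : 'cV[R]_p) := resid F (F x) - resid F x.

Definition xbar F (x : 'cV[R]_p) (H : 'M[R]_p) := x - H *m resid F x.

(* H_bar = H - H v v^T/(v^T v) + u v^T/(v^T v); convention: H_bar = H when v = 0
   (the update is undefined there; this only happens at the fixed point). *)
Definition Hbar F (x : 'cV[R]_p) (H : 'M[R]_p) : 'M[R]_p :=
  let u := uvec F x in let v := vvec F x in
  let vtv := (v^T *m v) 0 0 in
  if v == 0 then H
  else H - vtv^-1 *: (H *m (v *m v^T)) + vtv^-1 *: (u *m v^T).

Fixpoint qn_iter F (x0 : 'cV[R]_p) (H0 : 'M[R]_p) (k : nat) : 'cV[R]_p * 'M[R]_p :=
  match k with
  | 0 => (x0, H0)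
  | k'.+1 => let xH := qn_iter F x0 H0 k' in (xbar F xH.1 xH.2, Hbar F xH.1 xH.2)
  end.

End Defs.

(* Main.v *)
Require Import Defs.
From HB Require Import structures.
From mathcomp Require Import all_boot all_order all_algebra.
From mathcomp Require Import all_classical all_reals all_analysis.
Import Order.TTheory GRing.Theory Num.Theory.
Import numFieldNormedType.Exports.
Local Open Scope classical_set_scope.
Local Open Scope ring_scope.
From mathcomp Require Import ring lra.

Section Aux.
Context {R : realType}.

Lemma mxn_entry {m n} (B : 'M[R]_(m,n)) i j : `|B i j| <= `|B|.
Proof.
have -> : `|B| = mx_norm B by [].
rewrite mx_normrE.
exact: (le_bigmax _ _ (i, j)).
Qed.

Lemma mxn_le {m n} (B : 'M[R]_(m,n)) c : 0 <= c -> (forall i j, `|B i j| <= c) -> `|B| <= c.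
Proof.
move=> c0 H.
have -> : `|B| = mx_norm B by [].
rewrite mx_normrE; apply/bigmax_leP; split => // -[i j] _; exact: H.
Qed.

Lemma mxn_mul {m n k} (B : 'M[R]_(m,n)) (C : 'M[R]_(n,k)) :
  `|B *m C| <= n%:R * `|B| * `|C|.
Proof.
apply: mxn_le; first by rewrite mulr_ge0 // mulr_ge0.
move=> i j; rewrite mxE.
apply: le_trans (ler_norm_sum _ _ _) _.
apply: le_trans (_ : \sum_(l < n) (`|B| * `|C|) <= _).
  apply: ler_sum => l _; rewrite normrM; apply: ler_pM => //; exact: mxn_entry.
by rewrite sumr_const card_ord -[in leRHS]mulrA mulr_natl.
Qed.

Lemma mxn_tr {m n} (B : 'M[R]_(m,n)) : `|B^T| <= `|B|.
Proof. apply: mxn_le => // i j; rewrite mxE; exact: mxn_entry. Qed.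

Variable p : nat.
Variable nv : 'cV[R]_p -> R.
Hypothesis hnv : is_vnorm nv.

Lemma nv_ge0 x : 0 <= nv x. Proof. by case: hnv. Qed.
Lemma nvZ a x : nv (a *: x) = `|a| * nv x. Proof. by case: hnv. Qed.
Lemma nvD x y : nv (x + y) <= nv x + nv y. Proof. by case: hnv. Qed.
Lemma nv_eq0 x : nv x = 0 -> x = 0. Proof. by case: hnv => _ h _ _; exact: h. Qed.
Lemma nv0 : nv 0 = 0. Proof. by rewrite -(scale0r 0) nvZ normr0 mul0r. Qed.
Lemma nvN x : nv (- x) = nv x. Proof. by rewrite -scaleN1r nvZ normrN normr1 mul1r. Qed.
Lemma nvB x y : nv (x - y) <= nv x + nv y.
Proof. by apply: le_trans (nvD _ _) _; rewrite nvN. Qed.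
Lemma nv_sum {I : Type} (r : seq I) (P : pred I) (f : I -> 'cV[R]_p) :
  nv (\sum_(i <- r | P i) f i) <= \sum_(i <- r | P i) nv (f i).
Proof.
elim/big_rec2 : _ => [|i y1 y2 _ IH]; first by rewrite nv0.
by apply: le_trans (nvD _ _) _; rewrite lerD2l.
Qed.

Definition C1 := 1 + \sum_(i < p) \sum_(j < 1) nv (delta_mx i j).
Lemma C1_gt0 : 0 < C1.
Proof. by rewrite /C1 ltr_pwDl // sumr_ge0 // => i _; rewrite sumr_ge0 // => j _; exact: nv_ge0. Qed.

Lemma nv_le x : nv x <= C1 * `|x|.
Proof.
rewrite {1}(matrix_sum_delta x).
apply: le_trans (nv_sum _ _ _) _.
apply: le_trans (_ : \sum_(i < p) \sum_(j < 1) (`|x| * nv (delta_mx i j)) <= _).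
  apply: ler_sum => i _; apply: le_trans (nv_sum _ _ _) _.
  apply: ler_sum => j _; rewrite nvZ; apply: ler_wpM2r; [exact: nv_ge0|exact: mxn_entry].
under eq_bigr do rewrite -mulr_sumr.
rewrite -mulr_sumr mulrC /C1 ler_wpM2r // lerDr ler01 //.
Qed.

Lemma nv_lip x y : nv x - nv y <= nv (x - y).
Proof. by rewrite lerBlDr; apply: le_trans (nvD _ _); rewrite subrK. Qed.

Lemma nv_lip_abs x y : `|nv x - nv y| <= nv (x - y).
Proof.
rewrite ler_norml nv_lip andbT lerNl opprB.
by apply: le_trans (nv_lip _ _) _; rewrite -opprB nvN.
Qed.

Hypothesis hp : (1 <= p)%N.

Lemma nv_equiv : exists C2, 0 < C2 /\ forall x, `|x| <= C2 * nv x.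
Proof.
pose g : 'rV[R]_p -> R := fun v => nv v^T.
pose A := [set v : 'rV[R]_p | `|v| = 1].
have A0 : A !=set0.
  exists (const_mx 1); rewrite /A /=; apply/le_anti/andP; split.
    by apply: mxn_le => // i j; rewrite mxE normr1.
  have := mxn_entry (const_mx 1 : 'rV[R]_p) ord0 (Ordinal hp).
  by rewrite mxE normr1.
have cA : compact A.
  apply: bounded_closed_compact.
    exists 1; split; first by rewrite num_real.
    by move=> M M1 v; rewrite /A /= => ->; exact: ltW.
  have -> : A = (Num.norm : 'rV[R]_p -> R) @^-1` [set 1] by [].
  apply: preimage_closed; last exact: closed_eq.
  by move=> v _; exact: norm_continuous.
have cg : continuous g.
  move=> v; apply/(@cvgrPdist_le _ _ _ (nbhs (v : 'rV[R]_p)) (nbhs_filter v)) => e e0.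
  apply/(@nbhs_normP _ 'rV[R]_p v (fun t => `|g v - g t| <= e)); exists (e / C1); first by rewrite /= divr_gt0 // C1_gt0.
  move=> w /=; rewrite ltr_pdivlMr ?C1_gt0 // => vw.
  apply: le_trans (nv_lip_abs _ _) _; rewrite -linearB /=.
  apply: le_trans (nv_le _) _.
  rewrite mulrC; apply: ltW; apply: le_lt_trans vw.
  by apply: ler_wpM2r; [exact: ltW C1_gt0 | exact: mxn_tr].
have [c cA' cmin] := EVT_min_rV A0 cA (continuous_subspaceT cg).
have c1 : `|c| = 1 by move: cA'; rewrite inE.
have gc0 : 0 < g c.
  rewrite lt_def nv_ge0 andbT; apply/eqP => /nv_eq0 /(congr1 trmx).
  rewrite trmxK trmx0 => c0; move: c1; rewrite c0 normr0 => /eqP.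
  by rewrite eq_sym oner_eq0.
exists (g c)^-1; split; first by rewrite invr_gt0.
move=> x; have [->|x0] := eqVneq x 0; first by rewrite normr0 nv0 mulr0.
have nx0 : 0 < `|x| by rewrite normr_gt0.
have := cmin (`|x|^-1 *: x^T); rewrite inE /A /= normrZ.
have -> : `|x^T| = `|x|.
  by apply/le_anti/andP; split; [exact: mxn_tr|rewrite -{1}(trmxK x); exact: mxn_tr].
rewrite normrV ?unitfE ?gt_eqF // normr_id mulVf ?gt_eqF // => /(_ erefl).
rewrite /g linearZ /= trmxK nvZ normrV ?unitfE ?gt_eqF // normr_id.
move=> h; rewrite mulrC ler_pdivlMr // mulrC; move: h.
by rewrite ler_pdivlMl // mulrC.
Qed.

Variable C2 : R.
Hypothesis C2_gt0 : 0 < C2.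
Hypothesis hC2 : forall x : 'cV[R]_p, `|x| <= C2 * nv x.

Definition Lc := C1 * p%:R * C2.
Lemma Lc_ge0 : 0 <= Lc.
Proof. by rewrite /Lc !mulr_ge0 // ?ltW ?C1_gt0. Qed.

Lemma nv_mul (B : 'M[R]_p) y : nv (B *m y) <= Lc * `|B| * nv y.
Proof.
apply: le_trans (nv_le _) _.
apply: le_trans (_ : C1 * (p%:R * `|B| * `|y|) <= _).
  by apply: ler_wpM2l; [exact: ltW C1_gt0|exact: mxn_mul].
apply: le_trans (_ : C1 * (p%:R * `|B| * (C2 * nv y)) <= _).
  apply: ler_wpM2l; first exact: ltW C1_gt0.
  by apply: ler_wpM2l => //; rewrite mulr_ge0.
by rewrite /Lc le_eqVlt; apply/orP; left; apply/eqP; ring.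
Qed.

Variables (F : 'cV[R]_p -> 'cV[R]_p) (xs : 'cV[R]_p) (A : 'M[R]_p).
Hypothesis hdx : differentiable (resid F) xs /\ ('d (resid F) xs : 'cV[R]_p -> 'cV[R]_p) = mulmx A.
Hypothesis hGxs : resid F xs = 0.

Lemma diff_nv eta : 0 < eta -> exists rho, 0 < rho /\ forall x, nv (x - xs) < rho ->
  nv (resid F x - A *m (x - xs)) <= eta * nv (x - xs).
Proof.
move=> eta0; case: hdx => dG dA.
have := diff_locally dG; rewrite dA hGxs => /eqaddoP h.
have e0 : 0 < eta / (C1 * C2) by rewrite divr_gt0 // mulr_gt0 // C1_gt0.
have := h _ e0; case/nbhs_norm0P => e /= e_gt0 he.
exists (e / C2); split; first by rewrite divr_gt0.
move=> x hx.
have hx' : `|x - xs| < e.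
  apply: le_lt_trans (hC2 _) _; by rewrite mulrC -ltr_pdivlMr.
have := he _ hx'. rewrite /= !fctE /= subrK add0r.
move=> hb; apply: le_trans (nv_le _) _.
apply: le_trans (_ : C1 * (eta / (C1 * C2) * `|x - xs|) <= _).
  apply: ler_wpM2l; first exact: ltW C1_gt0.
  exact: hb.
apply: le_trans (_ : C1 * (eta / (C1 * C2) * (C2 * nv (x - xs))) <= _).
  apply: ler_wpM2l; first exact: ltW C1_gt0.
  by apply: ler_wpM2l => //; rewrite ltW // divr_gt0 // mulr_gt0 // C1_gt0.
rewrite le_eqVlt; apply/orP; left; apply/eqP; field.
by rewrite (gt_eqF C2_gt0) (gt_eqF C1_gt0).
Qed.

Lemma opnorm_le (B : 'M[R]_p) c : 0 <= c -> (forall v, nv (B *m v) <= c * nv v) ->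
  opnorm nv B <= c.
Proof.
move=> c0 h; apply: ge_sup.
  by exists (nv (B *m 0)); exists 0 => //=; rewrite nv0 ler01.
move=> _ [v /= hv <-]; apply: le_trans (h v) _.
by rewrite -[leRHS]mulr1 ler_wpM2l.
Qed.

Lemma frob_ge (B : 'M[R]_p) : `|B| <= frob B.
Proof.
apply: mxn_le; first exact: sqrtr_ge0.
move=> i j; rewrite -sqrtr_sqr /frob ler_sqrt.
  rewrite (bigD1 i) //= (bigD1 j) //= -addrA lerDl addr_ge0 //.
    by rewrite sumr_ge0 // => k _; rewrite sqr_ge0.
  by rewrite sumr_ge0 // => k _; rewrite sumr_ge0 // => l _; rewrite sqr_ge0.
by rewrite sumr_ge0 // => k _; rewrite sumr_ge0 // => l _; rewrite sqr_ge0.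
Qed.

Lemma normM_ge (M : 'M[R]_p) (hM : M \in unitmx) H :
  `|H| <= p%:R * (p%:R * `|invmx M| * `|invmx M|) * normM M H.
Proof.
have eH : H = invmx M *m (M *m H *m M *m invmx M).
  by rewrite mulmxK // mulKmx.
rewrite {1}eH.
apply: le_trans (mxn_mul _ _) _.
apply: le_trans (_ : p%:R * `|invmx M| * (p%:R * `|M *m H *m M| * `|invmx M|) <= _).
  by apply: ler_wpM2l; [rewrite mulr_ge0|exact: mxn_mul].
apply: le_trans (_ : p%:R * `|invmx M| * (p%:R * normM M H * `|invmx M|) <= _).
  apply: ler_wpM2l; first by rewrite mulr_ge0.
  apply: ler_wpM2r => //; apply: ler_wpM2l => //; exact: frob_ge.
by rewrite le_eqVlt; apply/orP; left; apply/eqP; ring.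
Qed.

Hypothesis hAu : A \in unitmx.
Variables (S : set 'cV[R]_p) (tau : R).
Hypothesis htau : 0 < tau < 1.
Hypothesis hconv : forall x, S x -> nv (F x - xs) <= tau * nv (x - xs).
Variables (N1 : set 'cV[R]_p) (N2 : set 'M[R]_p) (D : set 'cV[R]_p) (e1 e2 : R).
Hypothesis he1 : 0 < e1.
Hypothesis he2 : 0 < e2.
Hypothesis hN1sub : N1 `<=` D `&` S.
Hypothesis hN1ball : forall x, `|xs - x| < e1 -> N1 x.
Hypothesis hN2ball : forall H, `|invmx A - H| < e2 -> N2 H.
Hypothesis hN2inv : forall H, N2 H -> H \in unitmx.
Variable (M : 'M[R]_p).
Hypothesis hMinv : M \in unitmx.
Variables (d al1 al2 : R).
Hypothesis hd : 0 < d.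
Hypothesis hal1 : 0 <= al1.
Hypothesis hal2 : 0 <= al2.
Hypothesis hupd : forall x H, N1 x -> N2 H -> vvec F x != 0 ->
     normM M (Hbar F x H - invmx A) <=
       (1 + al1 * Num.max (powR (nv (F x - xs)) d) (powR (nv (x - xs)) d))
         * normM M (H - invmx A)
       + al2 * Num.max (powR (nv (F x - xs)) d) (powR (nv (x - xs)) d).
Variable r : R.
Hypothesis hr : 0 < r < 1.

Definition Ai := invmx A.
Definition nA := `|A|.
Definition nAi := `|Ai|.
Definition Lam := Lc * nA + 1.
Definition Lam2 := Lc * nAi + 1.
Definition Q := 2 * (1 + Lc * Lc * nA) * (1 + Lc) * Lam.
Definition beta := Num.min (r / Q) (e2 / 2).
Definition CMp := p%:R * (p%:R * `|invmx M| * `|invmx M|) + 1.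
Definition dls := beta / CMp.
Definition Qe := 2 * (Lc * (nAi + 1) + 1) * ((Lc * nA + 2) * Lam2 ^+ 2 + 1).
Definition eta := r / Qe.
Definition cc := al1 * dls + al2.

Lemma nA_ge0 : 0 <= nA. Proof. exact: normr_ge0. Qed.
Lemma nAi_ge0 : 0 <= nAi. Proof. exact: normr_ge0. Qed.
Lemma Lam_ge1 : 1 <= Lam.
Proof. by rewrite /Lam lerDr mulr_ge0 // ?Lc_ge0 ?nA_ge0. Qed.
Lemma Lam2_ge1 : 1 <= Lam2.
Proof. by rewrite /Lam2 lerDr mulr_ge0 // ?Lc_ge0 ?nAi_ge0. Qed.
Lemma Q_gt0 : 0 < Q.
Proof.
have h1 := Lc_ge0; have h2 := nA_ge0; have h3 := Lam_ge1.
have h4 : 0 <= Lc * Lc * nA by apply: mulr_ge0 => //; apply: mulr_ge0.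
rewrite /Q; apply: mulr_gt0; last lra.
apply: mulr_gt0; last lra.
apply: mulr_gt0; lra.
Qed.
Lemma CMp_gt0 : 0 < CMp.
Proof. by rewrite /CMp ltr_pwDr // !mulr_ge0. Qed.
Lemma beta_gt0 : 0 < beta.
Proof.
case/andP: hr => r0 _.
by rewrite /beta lt_min divr_gt0 ?Q_gt0 //= divr_gt0.
Qed.
Lemma beta_Q : beta * Q <= r.
Proof.
by rewrite -ler_pdivlMr ?Q_gt0 // /beta ge_min lexx.
Qed.
Lemma beta_e2 : beta < e2.
Proof.
have h : e2 / 2 < e2 by move: he2; lra.
apply: le_lt_trans h; by rewrite /beta ge_min lexx orbT.
Qed.
Lemma dls_gt0 : 0 < dls.
Proof. by rewrite /dls divr_gt0 ?beta_gt0 ?CMp_gt0. Qed.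
Lemma Qe_gt0 : 0 < Qe.
Proof.
have h1 := Lc_ge0; have h2 := nA_ge0; have h3 := nAi_ge0; have h4 := Lam2_ge1.
have h5 : 0 <= Lc * (nAi + 1) by apply: mulr_ge0 => //; lra.
have h6 : 0 <= (Lc * nA + 2) * Lam2 ^+ 2.
  apply: mulr_ge0; last by apply: exprn_ge0; lra.
  apply: addr_ge0 => //; exact: mulr_ge0.
rewrite /Qe; apply: mulr_gt0; last lra.
apply: mulr_gt0; lra.
Qed.
Lemma eta_gt0 : 0 < eta.
Proof. by case/andP: hr => r0 _; rewrite /eta divr_gt0 ?Qe_gt0. Qed.
Lemma eta_Qe : eta * Qe = r.
Proof. by rewrite /eta mulfVK // gt_eqF // Qe_gt0. Qed.
Lemma cc_ge0 : 0 <= cc.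
Proof. apply: addr_ge0 => //; apply: mulr_ge0 => //; exact: ltW dls_gt0. Qed.

Lemma X0 : 0 <= Lc * Lc * nA.
Proof. apply: mulr_ge0; [apply: mulr_ge0; exact: Lc_ge0 | exact: nA_ge0]. Qed.

Lemma I1 : Lc * beta * (Lc * nA) <= r / 2.
Proof.
have bQ := beta_Q; have l0 := Lc_ge0; have n0 := nA_ge0; have L1 := Lam_ge1.
have b0 := beta_gt0; have X0 := X0.
move: bQ; rewrite /Q; set X := Lc * Lc * nA => bQ.
have XX0 : 0 <= X by exact: X0.
have h0 : 1 <= (1 + Lc) * Lam by nra.
have h1' : (1 + X) * 1 <= (1 + X) * ((1 + Lc) * Lam).
  by apply: ler_wpM2l => //; move: X0; rewrite -/X; lra.
have h1 : X <= (1 + X) * (1 + Lc) * Lam by move: h1'; rewrite mulrA; lra.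
have -> : Lc * beta * (Lc * nA) = X * beta by rewrite /X; ring.
have h2 : X * beta <= (1 + X) * (1 + Lc) * Lam * beta by apply: ler_wpM2r; [exact: ltW b0 | exact: h1].
nra.
Qed.
Lemma I2 : Lc * beta * Lam <= 1 / 2.
Proof.
have bQ := beta_Q; have l0 := Lc_ge0; have n0 := nA_ge0; have L1 := Lam_ge1.
have b0 := beta_gt0; have X0 := X0.
move: bQ; rewrite /Q; set X := Lc * Lc * nA => bQ.
have XX0 : 0 <= X by exact: X0.
have r1 : r < 1 by case/andP: hr.
have h1 : Lc <= (1 + X) * (1 + Lc) by nra.
have h2 : Lc * Lam <= (1 + X) * (1 + Lc) * Lam by nra.
nra.
Qed.
Lemma Y0 : 0 <= (Lc * nA + 2) * Lam2 ^+ 2.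
Proof.
have := Lam2_ge1 => h.
apply: mulr_ge0; last by apply: exprn_ge0; move: h; lra.
apply: addr_ge0 => //; apply: mulr_ge0; [exact: Lc_ge0|exact: nA_ge0].
Qed.
Lemma I3 : Lc * (nAi + 1) * eta <= r / 2.
Proof.
have eQ := eta_Qe; have l0 := Lc_ge0; have n1 := nAi_ge0; have e0 := eta_gt0.
have Y0 := Y0.
move: eQ; rewrite /Qe; set Y := (Lc * nA + 2) * Lam2 ^+ 2 => eQ.
have YY0 : 0 <= Y by exact: Y0.
have Z0 : 0 <= Lc * (nAi + 1) by apply: mulr_ge0 => //; move: n1; lra.
have h1 : Lc * (nAi + 1) <= (Lc * (nAi + 1) + 1) * (Y + 1) by nra.
nra.
Qed.
Lemma I4 : Lam2 ^+ 2 * (Lc * nA + 2) * eta < 1.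
Proof.
have eQ := eta_Qe; have l0 := Lc_ge0; have n1 := nAi_ge0; have e0 := eta_gt0.
have Y0 := Y0.
have r1 : r < 1 by case/andP: hr.
move: eQ; rewrite /Qe; set Y := (Lc * nA + 2) * Lam2 ^+ 2 => eQ.
have YY0 : 0 <= Y by exact: Y0.
have Z0 : 0 <= Lc * (nAi + 1) by apply: mulr_ge0 => //; move: n1; lra.
have h1 : Y <= (Lc * (nAi + 1) + 1) * (Y + 1) by nra.
have -> : Lam2 ^+ 2 * (Lc * nA + 2) * eta = Y * eta by rewrite /Y; ring.
nra.
Qed.

Lemma beta_le1 : beta <= 1.
Proof.
have bQ := beta_Q; have l0 := Lc_ge0; have L1 := Lam_ge1; have b0 := beta_gt0.
have XX := X0; have r1 : r < 1 by case/andP: hr.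
move: bQ; rewrite /Q; set X := Lc * Lc * nA => bQ.
have XX0 : 0 <= X by exact: XX.
have q1 : 1 <= (1 + X) * (1 + Lc) by nra.
have q2 : 1 <= (1 + X) * (1 + Lc) * Lam by nra.
nra.
Qed.

Lemma H_close H : normM M (H - Ai) < dls -> `|H - Ai| <= beta /\ N2 H.
Proof.
move=> hH.
have h := normM_ge M hMinv (H - Ai).
have nm0 : 0 <= normM M (H - Ai) by exact: sqrtr_ge0.
have hb : `|H - Ai| < beta.
  apply: le_lt_trans h _.
  apply: (@le_lt_trans _ _ (CMp * normM M (H - Ai))).
    by apply: ler_wpM2r => //; rewrite /CMp lerDl.
  by rewrite /beta; rewrite -ltr_pdivlMl ?CMp_gt0 // mulrC; exact: hH.
split; first exact: ltW.
apply: hN2ball; rewrite distrC; exact: lt_trans hb beta_e2.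
Qed.

Lemma nH_le H : `|H - Ai| <= beta -> `|H| <= nAi + 1.
Proof.
move=> hb; have -> : H = Ai + (H - Ai) by rewrite addrC subrK.
apply: le_trans (ler_normD _ _) _; apply: lerD => //.
exact: le_trans hb beta_le1.
Qed.

Variable rho : R.
Hypothesis hrho : forall x, nv (x - xs) < rho ->
  nv (resid F x - A *m (x - xs)) <= eta * nv (x - xs).

Lemma step_x x H : nv (x - xs) < rho -> `|H - Ai| <= beta ->
  nv (xbar F x H - xs) <= r * nv (x - xs).
Proof.
move=> hx hb.
set y := x - xs. set w := resid F x - A *m y.
have e : xbar F x H - xs = (Ai - H) *m (A *m y) - H *m w.
  rewrite /xbar /w; move: (resid F x) => g.
  rewrite [H *m (g - _)]mulmxBr [(Ai - H) *m _]mulmxA [(Ai - H) *m A]mulmxBl mulVmx // mulmxBl mul1mx.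
  rewrite [H *m (A *m _)]mulmxA opprB addrA subrK /y addrAC //.
rewrite e; apply: le_trans (nvB _ _) _.
have ny0 := nv_ge0 y.
have hw : nv w <= eta * nv y by exact: hrho.
have t1 : nv ((Ai - H) *m (A *m y)) <= r / 2 * nv y.
  apply: le_trans (nv_mul _ _) _.
  apply: le_trans (_ : Lc * beta * (Lc * nA * nv y) <= _).
    apply: le_trans (_ : Lc * beta * nv (A *m y) <= _).
      apply: ler_wpM2r; first exact: nv_ge0.
      by apply: ler_wpM2l; [exact: Lc_ge0|rewrite distrC].
    apply: ler_wpM2l; first by apply: mulr_ge0; [exact: Lc_ge0|exact: ltW beta_gt0].
    exact: nv_mul.
  by rewrite mulrA; apply: ler_wpM2r => //; exact: I1.
have t2 : nv (H *m w) <= r / 2 * nv y.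
  apply: le_trans (nv_mul _ _) _.
  apply: le_trans (_ : Lc * (nAi + 1) * (eta * nv y) <= _).
    apply: le_trans (_ : Lc * (nAi + 1) * nv w <= _).
      apply: ler_wpM2r; first exact: nv_ge0.
      by apply: ler_wpM2l; [exact: Lc_ge0|exact: nH_le].
    apply: ler_wpM2l => //; apply: mulr_ge0; first exact: Lc_ge0.
    by apply: addr_ge0; [exact: nAi_ge0|].
  by rewrite mulrA; apply: ler_wpM2r => //; exact: I3.
move: t1 t2; lra.
Qed.

Lemma inv_bound H : `|H - Ai| <= beta -> H \in unitmx ->
  forall v, nv (invmx H *m v) <= 2 * Lam * nv v.
Proof.
move=> hb hu v; set z := invmx H *m v.
have ev : H *m z = v by rewrite /z mulKVmx.
have ez : A *m (Ai *m z) = z by rewrite mulKVmx.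
have h1 : nv z <= Lam * nv (Ai *m z).
  rewrite -{1}ez; apply: le_trans (nv_mul _ _) _.
  by apply: ler_wpM2r; [exact: nv_ge0|rewrite /Lam lerDl].
have eA : Ai *m z = H *m z - (H - Ai) *m z by rewrite mulmxBl opprB addrC subrK.
have h2 : nv (Ai *m z) <= nv v + Lc * beta * nv z.
  rewrite eA ev; apply: le_trans (nvB _ _) _; apply: lerD => //.
  apply: le_trans (nv_mul _ _) _; apply: ler_wpM2r; first exact: nv_ge0.
  by apply: ler_wpM2l => //; exact: Lc_ge0.
have i2 := I2; have L1 := Lam_ge1; have nz := nv_ge0 z; have nv0 := nv_ge0 v.
have h3 : Lam * nv (Ai *m z) <= Lam * (nv v + Lc * beta * nv z).
  by apply: ler_wpM2l => //; move: L1; lra.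
have h4 : Lc * beta * Lam * nv z <= 1 / 2 * nv z by apply: ler_wpM2r.
move: h1 h3 h4; set a := Lc * beta; nra.
Qed.

Lemma zid (a b c g R' : 'cV[R]_p) : R' - g = a + (b - a - (g - c) + (R' - (b + c))).
Proof. by apply/matrixP => i j; rewrite !mxE; ring. Qed.

Lemma vvec_ne0 x : nv (x - xs) < rho -> S x -> x != xs -> vvec F x != 0.
Proof.
move=> hx hS hne; apply/eqP => hv.
set y := x - xs.
have ny : 0 < nv y.
  rewrite lt_def nv_ge0 andbT; apply/eqP => /nv_eq0 /eqP.
  by rewrite subr_eq0 (negbTE hne).
have hF : nv (F x - xs) <= nv y.
  apply: le_trans (hconv _ hS) _; rewrite -[leRHS]mul1r; apply: ler_wpM2r; first exact: nv_ge0.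
  by case/andP: htau => _ /ltW.
set g := resid F x.
set w1 := g - A *m y.
set w2 := resid F (F x) - A *m (F x - xs).
have hw1 : nv w1 <= eta * nv y by exact: hrho.
have hw2 : nv w2 <= eta * nv y.
  apply: le_trans (hrho _ (le_lt_trans hF hx)) _.
  by apply: ler_wpM2l => //; exact: ltW eta_gt0.
have eF : F x - xs = g + y by rewrite /g /resid /y addrA subrK.
have e : A *m (A *m y) = - (A *m w1 - w1 + w2).
  have := zid (A *m (A *m y)) (A *m g) (A *m y) g (resid F (F x)).
  rewrite -/(vvec F x) hv => /esym /eqP; rewrite addr_eq0 => /eqP ->.
  by rewrite /w1 /w2 eF [A *m (g + y)]mulmxDr [A *m (g - _)]mulmxBr.
have hAz z : nv z <= Lam2 * nv (A *m z).
  have ez : Ai *m (A *m z) = z by rewrite mulKmx.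
  rewrite -{1}ez; apply: le_trans (nv_mul _ _) _.
  by apply: ler_wpM2r; [exact: nv_ge0|rewrite /Lam2 lerDl].
have h1 : nv (A *m (A *m y)) <= (Lc * nA + 2) * eta * nv y.
  rewrite e nvN; apply: le_trans (nvD _ _) _.
  apply: le_trans (_ : nv (A *m w1) + nv w1 + nv w2 <= _).
    by apply: lerD => //; apply: le_trans (nvB _ _) _.
  have : nv (A *m w1) <= Lc * nA * (eta * nv y).
    apply: le_trans (nv_mul _ _) _; apply: ler_wpM2l => //.
    by apply: mulr_ge0; [exact: Lc_ge0|exact: nA_ge0].
  move: hw1 hw2; lra.
have i4 := I4; have L1 := Lam2_ge1.
have h2 : nv y <= Lam2 * (Lam2 * nv (A *m (A *m y))).
  apply: le_trans (hAz y) _; apply: ler_wpM2l; first by move: L1; lra.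
  exact: hAz.
have h3 : Lam2 * (Lam2 * nv (A *m (A *m y))) <= Lam2 * (Lam2 * ((Lc * nA + 2) * eta * nv y)).
  apply: ler_wpM2l; first by move: L1; lra.
  apply: ler_wpM2l; first by move: L1; lra.
  exact: h1.
have h4 : Lam2 ^+ 2 * (Lc * nA + 2) * eta * nv y < 1 * nv y by rewrite ltr_pM2r.
move: h2 h3 h4; rewrite expr2; lra.
Qed.

Lemma step_H x H : N1 x -> normM M (H - Ai) < dls ->
  normM M (Hbar F x H - Ai) <= normM M (H - Ai) + cc * powR (nv (x - xs)) d.
Proof.
move=> hx hH.
have [_ hN2] := H_close _ hH.
have [_ hS] := hN1sub _ hx.
have P0 : 0 <= powR (nv (x - xs)) d := powR_ge0 _ _.
have cc0 := cc_ge0.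
have [hv0|hv] := eqVneq (vvec F x) 0.
  by rewrite /Hbar /= hv0 eqxx lerDl mulr_ge0.
apply: le_trans (hupd _ _ hx hN2 hv) _.
set m := Num.max _ _.
set e := normM M (H - invmx A).
have e0 : 0 <= e by exact: sqrtr_ge0.
have hF : nv (F x - xs) <= nv (x - xs).
  apply: le_trans (hconv _ hS) _; rewrite -[leRHS]mul1r; apply: ler_wpM2r; first exact: nv_ge0.
  by case/andP: htau => _ /ltW.
have hm : m <= powR (nv (x - xs)) d.
  rewrite /m ge_max lexx andbT.
  by apply: ge0_ler_powR => //; [exact: ltW|rewrite nnegrE nv_ge0|rewrite nnegrE nv_ge0].
have m0 : 0 <= m by rewrite /m le_max powR_ge0.
have hed : e <= dls by exact: ltW.
have t1 : m * (al1 * e + al2) <= powR (nv (x - xs)) d * (al1 * e + al2).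
  by apply: ler_wpM2r => //; apply: addr_ge0 => //; apply: mulr_ge0.
have t2 : powR (nv (x - xs)) d * (al1 * e + al2) <= powR (nv (x - xs)) d * cc.
  apply: ler_wpM2l => //; rewrite /cc lerD2r; exact: ler_wpM2l.
have -> : (1 + al1 * m) * e + al2 * m = e + m * (al1 * e + al2) by ring.
rewrite lerD2l (mulrC cc); exact: le_trans t1 t2.
Qed.

Hypothesis hrho0 : 0 < rho.
Hypothesis C2e1 : forall x, nv (x - xs) < e1 / C2 -> N1 x.

Lemma main_conc : exists eps : R, exists delta : R, 0 < eps /\ 0 < delta /\
    forall (x0 : 'cV[R]_p) (H0 : 'M[R]_p),
      nv (x0 - xs) < eps -> normM M (H0 - invmx A) < delta ->
      let x := fun k => (qn_iter F x0 H0 k).1 in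
      let H := fun k => (qn_iter F x0 H0 k).2 in
      (forall k, x k != xs -> vvec F (x k) != 0) /\
      (forall k, H k \in unitmx) /\
      ((fun k => nv (x k - xs)) @ \oo --> (0 : R)) /\
      (forall k, nv (x k.+1 - xs) <= r * nv (x k - xs)) /\
      (exists B : R, forall k, opnorm nv (H k) <= B /\ opnorm nv (invmx (H k)) <= B).
Proof.
have [r0 r1] : 0 < r /\ r < 1 by apply/andP.
set q := powR r d.
have q0 : 0 < q by rewrite /q powR_gt0.
have q1 : q < 1.
  have := gt0_ltr_powR hd; rewrite /q => /(_ r 1); rewrite powR1; apply.
    by rewrite nnegrE ltW. by rewrite nnegrE. done.
have dls0 := dls_gt0; have cc0 := cc_ge0.
set t := dls * (1 - q) / (2 * (cc + 1)).
have t0 : 0 < t.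
  rewrite /t divr_gt0 //; first by rewrite mulr_gt0 // subr_gt0.
  by rewrite mulr_gt0 //; move: cc0; lra.
have rho0 := hrho0.
exists (Num.min (Num.min (e1 / C2) rho) (powR t d^-1)); exists (dls / 2).
split; first by rewrite !lt_min divr_gt0 //= rho0 powR_gt0.
split; first by move: dls0; lra.
move=> x0 H0 hx0 hH0 x H.
move: hx0; rewrite !lt_min => /andP[/andP[hx1 hx2] hx3].
have q1' : 0 < 1 - q by rewrite subr_gt0.
pose Phi k := normM M (H k - Ai) + cc * powR (nv (x k - xs)) d / (1 - q).
have Pge k : 0 <= cc * powR (nv (x k - xs)) d / (1 - q).
  by rewrite divr_ge0 ?mulr_ge0 ?powR_ge0 // ltW.
have Phi0 : Phi 0 < dls.
  rewrite /Phi.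
  have hP : powR (nv (x 0 - xs)) d <= t.
    have -> : t = powR (powR t d^-1) d.
      by rewrite -powRrM mulVf ?gt_eqF // powRr1 // ltW.
    apply: ge0_ler_powR; [exact: ltW|by rewrite nnegrE nv_ge0|by rewrite nnegrE powR_ge0|].
    exact: ltW.
  have h2 : cc * powR (nv (x 0 - xs)) d / (1 - q) <= cc * t / (1 - q).
    apply: ler_wpM2r; first by rewrite invr_ge0 ltW.
    exact: ler_wpM2l.
  have h3 : cc * t / (1 - q) = dls / 2 * (cc / (cc + 1)).
    rewrite /t; field.
    by apply/andP; split; [move: cc0; lra|move: q1'; lra].
  have h4 : cc / (cc + 1) <= 1 by rewrite ler_pdivrMr; [move: cc0; lra|move: cc0; lra].
  have h5 : dls / 2 * (cc / (cc + 1)) <= dls / 2.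
    by rewrite -[leRHS]mulr1; apply: ler_wpM2l => //; move: dls0; lra.
  move: hH0 h2 h3 h5; rewrite /Ai; lra.
have good k : nv (x k - xs) <= nv (x0 - xs) -> Phi k <= Phi 0 ->
    [/\ N1 (x k), S (x k), nv (x k - xs) < rho & normM M (H k - Ai) < dls].
  move=> h1 h2.
  have n1 : N1 (x k) by apply: C2e1; exact: le_lt_trans h1 hx1.
  split => //; first by case: (hN1sub _ n1).
    exact: le_lt_trans h1 hx2.
  by move: (Pge k) h2 Phi0; rewrite /Phi; lra.
have xS k : x k.+1 = xbar F (x k) (H k) by [].
have HS k : H k.+1 = Hbar F (x k) (H k) by [].
have stepx k : nv (x k - xs) <= nv (x0 - xs) -> Phi k <= Phi 0 ->
    nv (x k.+1 - xs) <= r * nv (x k - xs).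
  move=> h1 h2; have [_ _ hr1 he] := good k h1 h2.
  have [hb _] := H_close _ he.
  by rewrite xS; exact: step_x.
have inv k : nv (x k - xs) <= nv (x0 - xs) /\ Phi k <= Phi 0.
  elim: k => [|k [IH1 IH2]]; first by split.
  have [n1 _ hr1 he] := good k IH1 IH2.
  have sx := stepx k IH1 IH2.
  have nk0 := nv_ge0 (x k - xs).
  split.
    apply: le_trans sx _; apply: le_trans IH1.
    by rewrite -[leRHS]mul1r; apply: ler_wpM2r => //; exact: ltW.
  apply: le_trans IH2.
  have hH := step_H _ _ n1 he; rewrite -HS in hH.
  have hp1 : powR (nv (x k.+1 - xs)) d <= q * powR (nv (x k - xs)) d.
    rewrite /q -powRM ?(ltW r0) //.
    apply: ge0_ler_powR; [exact: ltW|by rewrite nnegrE nv_ge0|rewrite nnegrE mulr_ge0 // ltW //|exact: sx].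
  have hp2 : cc * powR (nv (x k.+1 - xs)) d / (1 - q) <= cc * (q * powR (nv (x k - xs)) d) / (1 - q).
    apply: ler_wpM2r; first by rewrite invr_ge0 ltW.
    exact: ler_wpM2l.
  have e3 : cc * (q * powR (nv (x k - xs)) d) / (1 - q) + cc * powR (nv (x k - xs)) d
      = cc * powR (nv (x k - xs)) d / (1 - q).
    by field; move: q1'; lra.
  move: hH hp2 e3; rewrite /Phi; lra.
have geo k : nv (x k - xs) <= r ^+ k * nv (x0 - xs).
  elim: k => [|k IH]; first by rewrite expr0 mul1r.
  have [i1 i2] := inv k.
  apply: le_trans (stepx k i1 i2) _.
  by rewrite exprS -mulrA; apply: ler_wpM2l => //; exact: ltW.
split.
  move=> k hk; have [i1 i2] := inv k; have [_ hS hr1 _] := good k i1 i2.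
  exact: vvec_ne0.
split.
  move=> k; have [i1 i2] := inv k; have [_ _ _ he] := good k i1 i2.
  have [_ hN2] := H_close _ he; exact: hN2inv.
split.
  apply: (@squeeze_cvgr nat \oo _ R (fun=> 0) (geometric (nv (x0 - xs)) r)).
  - by near=> k; rewrite nv_ge0 /= mulrC geo.
  - exact: cvg_cst.
  - by apply: cvg_geometric; rewrite ger0_norm // ltW.
split.
  by move=> k; have [i1 i2] := inv k; exact: stepx.
exists (Num.max (Lc * (nAi + 1)) (2 * Lam)) => k.
have [i1 i2] := inv k; have [_ _ _ he] := good k i1 i2.
have [hb hN2] := H_close _ he.
have hLc := Lc_ge0; have hA := nAi_ge0; have hL := Lam_ge1.
split.
  apply: (@le_trans _ _ (Lc * (nAi + 1))); last by rewrite le_max lexx.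
  apply: opnorm_le; first by apply: mulr_ge0 => //; move: hA; lra.
  move=> v; apply: le_trans (nv_mul _ _) _; apply: ler_wpM2r; first exact: nv_ge0.
  by apply: ler_wpM2l => //; exact: nH_le.
apply: (@le_trans _ _ (2 * Lam)); last by rewrite le_max lexx orbT.
apply: opnorm_le; first by move: hL; lra.
by apply: inv_bound => //; exact: hN2inv.
Unshelve. all: by end_near.
Qed.
End Aux.

Theorem theorem1 (R : realType) (p : nat) (hp : (1 <= p)%N)
  (nv : 'cV[R]_p -> R) (hnv : is_vnorm nv)
  (F : 'cV[R]_p -> 'cV[R]_p) (xs : 'cV[R]_p)
  (* standing assumption: local linear convergence of the MM map *)
  (S : set 'cV[R]_p) (tau : R)
  (hS : nbhs xs S) (htau : 0 < tau < 1)
  (hconv : forall x, S x -> nv (F x - xs) <= tau * nv (x - xs))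
  (M : 'M[R]_p) (hMsym : M^T = M) (hMinv : M \in unitmx)
  (* (A1) *)
  (D : set 'cV[R]_p) (dG : 'cV[R]_p -> 'M[R]_p) (d K : R)
  (hDopen : open D) (hDconv : convex_set D) (hDxs : D xs)
  (hdiff : forall x, D x ->
     differentiable (resid F) x /\ ('d (resid F) x : 'cV[R]_p -> 'cV[R]_p) = mulmx (dG x))
  (hGxs : resid F xs = 0) (hdGinv : dG xs \in unitmx) (hd : 0 < d)
  (hHold : forall x, D x -> opnorm nv (dG x - dG xs) <= K * powR (nv (x - xs)) d)
  (* (A2) *)
  (N1 : set 'cV[R]_p) (N2 : set 'M[R]_p) (al1 al2 : R)
  (hN1 : nbhs xs N1) (hN1sub : N1 `<=` D `&` S)
  (hN2 : nbhs (invmx (dG xs)) N2) (hN2inv : forall H, N2 H -> H \in unitmx)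
  (hal1 : 0 <= al1) (hal2 : 0 <= al2)
  (hupd : forall x H, N1 x -> N2 H -> vvec F x != 0 ->
     normM M (Hbar F x H - invmx (dG xs)) <=
       (1 + al1 * Num.max (powR (nv (F x - xs)) d) (powR (nv (x - xs)) d))
         * normM M (H - invmx (dG xs))
       + al2 * Num.max (powR (nv (F x - xs)) d) (powR (nv (x - xs)) d)) :
  forall r : R, 0 < r < 1 ->
  exists eps : R, exists delta : R, 0 < eps /\ 0 < delta /\
    forall (x0 : 'cV[R]_p) (H0 : 'M[R]_p),
      nv (x0 - xs) < eps -> normM M (H0 - invmx (dG xs)) < delta ->
      let x := fun k => (qn_iter F x0 H0 k).1 in
      let H := fun k => (qn_iter F x0 H0 k).2 in
      (* well-definedness: the update denominator is nonzero unless x_k = x* *)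
      (forall k, x k != xs -> vvec F (x k) != 0) /\
      (forall k, H k \in unitmx) /\
      ((fun k => nv (x k - xs)) @ \oo --> (0 : R)) /\
      (forall k, nv (x k.+1 - xs) <= r * nv (x k - xs)) /\
      (exists B : R, forall k, opnorm nv (H k) <= B /\ opnorm nv (invmx (H k)) <= B).
Proof.
move=> r hr.
have [C2 [C2p hC2]] := @nv_equiv R p nv hnv hp.
have eta0 : 0 < eta p nv C2 (dG xs) r by apply: eta_gt0.
have [rho [rho0 hrho]] := @diff_nv R p nv hnv C2 C2p hC2 F xs (dG xs) (hdiff _ hDxs) hGxs _ eta0.
have /nbhs_normP [e1 /= e1p hb1] := hN1.
have /nbhs_normP [e2 /= e2p hb2] := hN2.
have C2e1 : forall x, nv (x - xs) < e1 / C2 -> N1 x.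
  move=> x hx; apply: hb1 => /=; rewrite distrC.
  apply: le_lt_trans (hC2 _) _; by rewrite mulrC -ltr_pdivlMr.
have hN2b : forall H, `|invmx (dG xs) - H| < e2 -> N2 H.
  by move=> H hH; apply: hb2.
exact: (@main_conc R p nv hnv C2 C2p hC2 F xs (dG xs) hdGinv S tau htau hconv
  N1 N2 D e1 e2 e1p e2p hN1sub hN2b hN2inv M hMinv d al1 al2 hd hal1 hal2 hupd
  r hr rho hrho rho0 C2e1).
Qed.
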